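(* Every integer $n\geq 3$ with $n\neq 5$ and $n\not\equiv 0\pmod 4$ can be written as a sum of four squares of coprime integers, at most one of which is zero. *)

(* Defs.v *)
From mathcomp Require Import all_boot all_order all_algebra.
Set Implicit Arguments. Unset Strict Implicit. Unset Printing Implicit Defensive.
Import Order.TTheory GRing.Theory Num.Theory.

(* Main.v *)
Require Import Defs.
From mathcomp Require Import all_boot all_order all_algebra.
From mathcomp Require Import zify ring.
Import Order.TTheory GRing.Theory Num.Theory.

Lemma sq_inj (p h x x' : nat) : prime p -> (h * 2 <= p)%N -> (x <= h)%N -> (x' <= h)%N ->
  (x * x %% p = x' * x' %% p)%N -> x = x'.
Proof.
move=> pp hp.
wlog le : x x' / (x' <= x)%N.
  move=> W hx hx' e; case: (leqP x' x) => l; first exact: W.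
  by apply/esym; apply: W => //; apply: ltnW.
move=> hx hx' e.
case: (ltngtP x x') => // lt; first by move: le; rewrite leqNgt lt.
have : (p %| (x - x') * (x + x'))%N.
  rewrite -subn_sqr -eqn_mod_dvd; last by rewrite leq_exp2r.
  by rewrite !expnS !expn0 !muln1; apply/eqP.
rewrite Euclid_dvdM // => /orP [] /dvdn_leq; lia.
Qed.

Lemma step1 (p : nat) : prime p -> exists x y : nat,
  [/\ (x <= p./2)%N, (y <= p./2)%N & (p %| x * x + y * y + 1)%N].
Proof.
move=> pp; set h := p./2.
have p0 : (0 < p)%N by apply: prime_gt0.
have hp : (h * 2 <= p <= h * 2 + 1)%N.
  by have := odd_double_half p; rewrite -/h -muln2; case: (odd p) => /= <-; lia.
have lt1 : forall x : nat, (x * x %% p < p)%N by move=> x; rewrite ltn_pmod.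
have lt2 : forall y : nat, (p.-1 - y * y %% p < p)%N by move=> y; lia.
pose f (u : 'I_h.+1 + 'I_h.+1) : 'I_p :=
  match u with inl x => Ordinal (lt1 x) | inr y => Ordinal (lt2 y) end.
have : ~~ injectiveb f.
  apply/negP => /injectiveP /leq_card; rewrite card_sum !card_ord; lia.
case/injectivePn => u [v] uv e.
have sqm : forall y : nat, (y * y %% p <= p.-1)%N.
  by move=> y; rewrite -ltnS prednK //.
have fin : forall x y : 'I_h.+1, (x * x %% p)%N = (p.-1 - y * y %% p)%N ->
    exists x y : nat, [/\ (x <= h)%N, (y <= h)%N & (p %| x * x + y * y + 1)%N].
  move=> x y exy; exists x, y; split; [exact: (ltn_ord x) | exact: (ltn_ord y) | ].
  have hb := sqm y.
  rewrite (divn_eq (x * x) p) (divn_eq (y * y) p) exy.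
  move: (x * x %/ p)%N (y * y %/ p)%N (y * y %% p)%N hb p0 => A B b hb p0'.
  have -> : (A * p + (p.-1 - b) + (B * p + b) + 1 = (A + B + 1) * p)%N.
    clear -hb p0'; lia.
  exact: dvdn_mull.
case: u v uv e => [x|y] [x'|y'] uv /= e.
- case/eqP: uv; congr inl; apply/val_inj => /=.
  apply: (@sq_inj p h x x' pp); first by move: hp => /andP[].
  - by have := ltn_ord x.
  - by have := ltn_ord x'.
  by move: e => /(congr1 val).
- by apply: (fin x y'); move: e => /(congr1 val).
- by apply: (fin x' y); move: e => /(congr1 val) /esym.
- case/eqP: uv; congr inr; apply/val_inj => /=.
  apply: (@sq_inj p h y y' pp); first by move: hp => /andP[].
  - by have := ltn_ord y.
  - by have := ltn_ord y'.
  move: e => /(congr1 val) /=; have := sqm y; have := sqm y'; lia.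
Qed.



Local Open Scope ring_scope.

Definition P4 (a b c d : int) := forall q : nat, prime q ->
  (q %| a)%Z -> (q %| b)%Z -> (q %| c)%Z -> (q %| d)%Z -> False.

Lemma P4_gcd a b c d : P4 a b c d -> gcdz (gcdz a b) (gcdz c d) = 1.
Proof.
move=> H.
have key : forall q : nat, prime q -> ~~ (q %| gcdz (gcdz a b) (gcdz c d))%Z.
  move=> q pq; apply/negP; rewrite !dvdz_gcd => /andP[/andP[qa qb] /andP[qc qd]].
  exact: (H q pq qa qb qc qd).
move: key; set g := gcdz _ _.
have [k ->] : exists k : nat, g = k by exists `|g|%N; rewrite /g /gcdz.
case: k => [|[|k]] key //.
- by move: (key 2%N isT); rewrite dvdz0.
- have pp := pdiv_prime (isT : (1 < k.+2)%N).
  by move: (key _ pp); rewrite dvdzE /= pdiv_dvd.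
Qed.

Lemma primez_dvdM (q : nat) (x y : int) : prime q -> (q %| x * y)%Z ->
  (q %| x)%Z \/ (q %| y)%Z.
Proof. by move=> pq; rewrite !dvdzE abszM Euclid_dvdM // => /orP. Qed.

Lemma primez_dvd_prime (q p : nat) : prime q -> prime p -> (q %| p%:Z)%Z -> q = p.
Proof.
move=> pq /primeP[_ Hp]; rewrite dvdzE /= => /Hp /orP[/eqP q1|/eqP //].
by rewrite q1 in pq.
Qed.

Lemma unit_cop (x : int) : (forall q : nat, prime q -> (q %| x)%Z -> False) -> x ^+ 2 = 1.
Proof.
move=> H.
have : `|x|%N = 1%N.
  case E: `|x|%N => [|[|k]] //.
  - by case: (H 2%N isT); rewrite dvdzE E.
  - have pp := pdiv_prime (isT : (1 < k.+2)%N).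
    by case: (H _ pp); rewrite dvdzE E /= pdiv_dvd.
move=> E. have : `|x| = 1 :> int by rewrite -abszE E.
move=> h; nia.
Qed.

Definition sq4 (a b c d : int) := a ^+ 2 + b ^+ 2 + c ^+ 2 + d ^+ 2.

Definition good (n : int) := exists a b c d : int,
  [/\ n = sq4 a b c d, P4 a b c d & (count (fun x : int => x == 0) [:: a; b; c; d] <= 1)%N].

Lemma core1 (s t k : int) : s = 3 * k -> s ^+ 2 + t ^+ 2 != 1 ->
  (forall q : nat, prime q -> (q %| s)%Z -> (q %| t)%Z -> False) ->
  good (s ^+ 2 + t ^+ 2).
Proof.
move=> sk n1 cop.
have t0 : t != 0.
  apply/eqP => t0; apply: (cop 3%N isT); rewrite ?t0 ?dvdz0 // sk; exact: dvdz_mulr.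
have k0 : k != 0.
  apply/eqP => k0; move: n1; rewrite (unit_cop t) ?sk ?k0 ?mulr0 ?expr0n //.
  by move=> q pq qt; apply: (cop q pq _ qt); rewrite sk k0 mulr0 dvdz0.
exists t, (2 * k), (2 * k), k; split.
- rewrite /sq4 sk; ring.
- move=> q pq qt _ _ qk; apply: (cop q pq _ qt); rewrite sk; exact: dvdz_mull.
- have k2 : 2 * k != 0 by rewrite mulf_neq0.
  by rewrite /= (negbTE t0) (negbTE k0) (negbTE k2).
Qed.

Lemma core2 (s t k : int) : s = t + 3 * k -> s ^+ 2 + t ^+ 2 != 2 -> s ^+ 2 + t ^+ 2 != 5 ->
  (forall q : nat, prime q -> (q %| s)%Z -> (q %| t)%Z -> False) ->
  good (s ^+ 2 + t ^+ 2).
Proof.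
move=> sk n2 n5 cop.
have k0 : k != 0.
  apply/eqP => k0; move: n2; rewrite sk k0 mulr0 addr0.
  have -> : t ^+ 2 = 1.
    apply: unit_cop => q pq qt; apply: (cop q pq _ qt); rewrite sk k0 mulr0 addr0 //.
  by [].
have a0 : t + 2 * k != 0.
  apply/eqP => a0; have tE : t = - (2 * k) by lia.
  have h : k ^+ 2 = 1.
    apply: unit_cop => q pq qk; apply: (cop q pq).
    - by rewrite sk tE (_ : - (2 * k) + 3 * k = k) //; ring.
    - by rewrite tE (_ : - (2 * k) = (-2) * k); [exact: dvdz_mull| ring].
  move: n5; rewrite sk tE; have -> : (- (2 * k) + 3 * k) ^+ 2 + (- (2 * k)) ^+ 2 = 5 * k ^+ 2 by ring.
  by rewrite h.
have b0 : t + k != 0.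
  apply/eqP => b0; have tE : t = - k by lia.
  have h : k ^+ 2 = 1.
    apply: unit_cop => q pq qk; apply: (cop q pq).
    - by rewrite sk tE (_ : - k + 3 * k = 2 * k); [exact: dvdz_mull| ring].
    - by rewrite tE (_ : - k = (-1) * k); [exact: dvdz_mull| ring].
  move: n5; rewrite sk tE; have -> : (- k + 3 * k) ^+ 2 + (- k) ^+ 2 = 5 * k ^+ 2 by ring.
  by rewrite h.
have c0 : 2 * k != 0 by rewrite mulf_neq0.
exists (t + 2 * k), (2 * k), (t + k), 0; split.
- rewrite /sq4 sk; ring.
- move=> q pq q1 q2 q3 _.
  have qk : (q %| k)%Z by rewrite (_ : k = (t + 2 * k) - (t + k)); [exact: rpredB| ring].
  have qt : (q %| t)%Z by rewrite (_ : t = (t + k) - k); [exact: rpredB| ring].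
  apply: (cop q pq _ qt); rewrite sk; apply: rpredD => //; exact: dvdz_mull.
- by rewrite /= (negbTE a0) (negbTE b0) (negbTE c0).
Qed.

Lemma mod3cases (s t : int) :
  (3 %| s)%Z \/ (3 %| t)%Z \/ (3 %| s - t)%Z \/ (3 %| s + t)%Z.
Proof.
have := divz_eq s 3; have := modz_ge0 s (isT : (3:int) != 0); have := ltz_pmod s (isT : (0:int) < 3).
have := divz_eq t 3; have := modz_ge0 t (isT : (3:int) != 0); have := ltz_pmod t (isT : (0:int) < 3).
set a := (s %/ 3)%Z; set b := (s %% 3)%Z; set c := (t %/ 3)%Z; set d := (t %% 3)%Z.
move=> h1 h2 h3 h4 h5 h6.
have : b = 0 \/ b = 1 \/ b = 2 by lia.
have : d = 0 \/ d = 1 \/ d = 2 by lia.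
case=> [d0|[d1|d2]]; case=> [b0|[b1|b2]].
all: first [left; apply/dvdzP; exists a; lia
  | right; left; apply/dvdzP; exists c; lia
  | right; right; left; apply/dvdzP; exists (a - c); lia
  | right; right; right; apply/dvdzP; exists (a + c + 1); lia].
Qed.

Lemma three_trick (s t : int) : s ^+ 2 + t ^+ 2 != 1 -> s ^+ 2 + t ^+ 2 != 2 ->
  s ^+ 2 + t ^+ 2 != 5 ->
  (forall q : nat, prime q -> (q %| s)%Z -> (q %| t)%Z -> False) ->
  good (s ^+ 2 + t ^+ 2).
Proof.
move=> n1 n2 n5 cop.
have := mod3cases s t.
case=> [|[|[|]]] /dvdzP [k hk].
- by apply: (@core1 _ _ k) => //; rewrite hk mulrC.
- rewrite addrC; apply: (@core1 _ _ k).
  + by rewrite hk mulrC.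
  + by rewrite addrC.
  + by move=> q pq qt qs; exact: (cop q pq qs qt).
- apply: (@core2 _ _ k) => //; lia.
- have -> : t ^+ 2 = (- t) ^+ 2 by rewrite sqrrN.
  apply: (@core2 _ _ k); rewrite ?sqrrN //.
  + lia.
  + move=> q pq qs qt; apply: (cop q pq qs); by rewrite -(opprK t) rpredN.
Qed.


Lemma three_trick' (s t n : int) : n = s ^+ 2 + t ^+ 2 -> n != 1 -> n != 2 -> n != 5 ->
  (forall q : nat, prime q -> (q %| s)%Z -> (q %| t)%Z -> False) -> good n.
Proof. by move=> -> *; apply: three_trick. Qed.

Ltac pick H s t := apply: (@three_trick' s t); [by rewrite /sq4; ring
  | by [] | by [] | by []
  | let q := fresh "q" in let pq := fresh "pq" in
    move=> q pq ? ?; apply: (H q pq); by rewrite ?dvdz0].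

Lemma from_prim (n a b c d : int) : n = sq4 a b c d -> P4 a b c d ->
  n != 1 -> n != 2 -> n != 5 -> good n.
Proof.
move=> hn H n1 n2 n5.
case: (leqP (count (fun x : int => x == 0) [:: a; b; c; d]) 1) => [hc|hc].
  by exists a, b, c, d.
subst n.
move: hc => /=; case: eqP => a0; case: eqP => b0; case: eqP => c0; case: eqP => d0 //= _.
all: try subst a; try subst b; try subst c; try subst d.
all: first [pick H a b | pick H a c | pick H a d | pick H b c | pick H b d | pick H c d
  | pick H a (0:int) | pick H b (0:int) | pick H c (0:int) | pick H d (0:int) | pick H (0:int) (0:int)].
Qed.
Lemma cres (x M H : int) : 0 < M -> exists c, - H <= x - M * c <= M - 1 - H.
Proof.
move=> M0; exists ((x + H) %/ M)%Z.
have := divz_eq (x + H) M; have := modz_ge0 (x + H) (lt0r_neq0 M0); have := ltz_pmod (x + H) M0.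
move: ((x + H) %/ M)%Z ((x + H) %% M)%Z => q r; lia.
Qed.

Lemma sq_le (y H : int) : - H <= y <= H -> y ^+ 2 <= H ^+ 2.
Proof. move=> h; nia. Qed.

Lemma eqH (y H : int) : y ^+ 2 = H ^+ 2 -> y <= H - 1 -> 0 <= H -> y = - H.
Proof. move=> *; nia. Qed.

Lemma r_bounds (M H r y0 y1 y2 y3 : int) : 2 * H <= M <= 2 * H + 1 -> 2 <= M ->
  - H <= y0 <= M - 1 - H -> - H <= y1 <= M - 1 - H ->
  - H <= y2 <= M - 1 - H -> - H <= y3 <= M - 1 - H ->
  sq4 y0 y1 y2 y3 = M * r ->
  0 <= r /\ (M <= r -> [/\ y0 = - H, y1 = - H, y2 = - H, y3 = - H & M = 2 * H]).
Proof.
move=> hMH M2 h0 h1 h2 h3 e.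
have s0 := sqr_ge0 y0; have s1 := sqr_ge0 y1; have s2 := sqr_ge0 y2; have s3 := sqr_ge0 y3.
have H0 : 0 <= H by lia.
have l0 : y0 ^+ 2 <= H ^+ 2 by apply: sq_le; lia.
have l1 : y1 ^+ 2 <= H ^+ 2 by apply: sq_le; lia.
have l2 : y2 ^+ 2 <= H ^+ 2 by apply: sq_le; lia.
have l3 : y3 ^+ 2 <= H ^+ 2 by apply: sq_le; lia.
move: e; rewrite /sq4 => e.
have Mr0 : 0 <= M * r by rewrite -e; lia.
split; first by move: Mr0; rewrite pmulr_rge0 //; lia.
move=> Mr.
have MM : M * M <= M * r by apply: ler_wpM2l => //; lia.
have MH : M = 2 * H.
  case: (leP M (2 * H)) => hm; first by lia.
  have hM : M = 2 * H + 1 by lia.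
  have : M * M = 4 * H ^+ 2 + 4 * H + 1 by rewrite hM; ring.
  lia.
have M4 : M * M = 4 * H ^+ 2 by rewrite MH; ring.
have E0 : y0 ^+ 2 = H ^+ 2 by lia.
have E1 : y1 ^+ 2 = H ^+ 2 by lia.
have E2 : y2 ^+ 2 = H ^+ 2 by lia.
have E3 : y3 ^+ 2 = H ^+ 2 by lia.
split => //; apply: eqH => //; lia.
Qed.

Lemma sq4_eq0 (y0 y1 y2 y3 : int) : sq4 y0 y1 y2 y3 = 0 -> [/\ y0 = 0, y1 = 0, y2 = 0 & y3 = 0].
Proof.
rewrite /sq4 => e0.
have s0 := sqr_ge0 y0; have s1 := sqr_ge0 y1; have s2 := sqr_ge0 y2; have s3 := sqr_ge0 y3.
have z0 : y0 ^+ 2 = 0 by lia.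
have z1 : y1 ^+ 2 = 0 by lia.
have z2 : y2 ^+ 2 = 0 by lia.
have z3 : y3 ^+ 2 = 0 by lia.
by split; apply/eqP; rewrite -sqrf_eq0; apply/eqP.
Qed.

Lemma descent (p : nat) : prime p -> forall m : nat, (0 < m < p)%N ->
  forall x0 x1 x2 x3 : int, (m * p)%:Z = sq4 x0 x1 x2 x3 ->
  exists a b c d : int, p%:Z = sq4 a b c d.
Proof.
move=> pp; elim/ltn_ind => m IH /andP[m0 mp] x0 x1 x2 x3 hx.
have [m1|m1] := eqVneq m 1%N.
  by exists x0, x1, x2, x3; rewrite -hx m1 mul1n.
have m2 : (1 < m)%N by lia.
set M : int := m%:Z; set P : int := p%:Z; set H : int := (m./2)%:Z.
have hMH : 2 * H <= M <= 2 * H + 1.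
  by have := odd_double_half m; rewrite /M /H -muln2; case: (odd m) => /= <-; lia.
have M0 : 0 < M by rewrite /M; lia.
have hx' : M * P = sq4 x0 x1 x2 x3 by rewrite -hx PoszM.
have noM : (m %| p)%N -> False.
  by case/primeP: pp => _ /[apply] /orP[] /eqP; lia.
have [c0 hc0] := @cres x0 M H M0; have [c1 hc1] := @cres x1 M H M0.
have [c2 hc2] := @cres x2 M H M0; have [c3 hc3] := @cres x3 M H M0.
set y0 := x0 - M * c0; set y1 := x1 - M * c1; set y2 := x2 - M * c2; set y3 := x3 - M * c3.
set sxc := x0 * c0 + x1 * c1 + x2 * c2 + x3 * c3.
set r := P - 2 * sxc + M * sq4 c0 c1 c2 c3.
have e2 : sq4 y0 y1 y2 y3 = M * r.
  transitivity (M * P - 2 * M * sxc + M ^+ 2 * sq4 c0 c1 c2 c3).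
    by rewrite hx' /y0 /y1 /y2 /y3 /sxc /sq4; ring.
  by rewrite /r; ring.
set w0 := P - sxc.
set w1 := x0 * c1 - x1 * c0 + x2 * c3 - x3 * c2.
set w2 := x0 * c2 - x1 * c3 - x2 * c0 + x3 * c1.
set w3 := x0 * c3 + x1 * c2 - x2 * c1 - x3 * c0.
have e1 : M * w0 = x0 * y0 + x1 * y1 + x2 * y2 + x3 * y3.
  transitivity (M * P - M * sxc); first by rewrite /w0; ring.
  by rewrite hx' /y0 /y1 /y2 /y3 /sxc /sq4; ring.
have ew : sq4 w0 w1 w2 w3 = P * r.
  apply: (@mulfI _ (M ^+ 2)); first by rewrite expf_neq0 // lt0r_neq0.
  transitivity (sq4 x0 x1 x2 x3 * sq4 y0 y1 y2 y3); last by rewrite -hx' e2; ring.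
  transitivity ((M * w0) ^+ 2 + (M * w1) ^+ 2 + (M * w2) ^+ 2 + (M * w3) ^+ 2).
    by rewrite /sq4; ring.
  rewrite e1 /w1 /w2 /w3 /y0 /y1 /y2 /y3 /sq4; ring.
have M2' : 2 <= M by rewrite /M; clear -m2; lia.
have [r0 rM] := @r_bounds M H r y0 y1 y2 y3 hMH M2' hc0 hc1 hc2 hc3 e2.
have [r0'|rpos] := eqVneq r 0.
  move: e2; rewrite r0' mulr0 => /sq4_eq0 [].
  rewrite /y0 /y1 /y2 /y3 => /eqP; rewrite subr_eq0 => /eqP X0 /eqP; rewrite subr_eq0 => /eqP X1.
  move=> /eqP; rewrite subr_eq0 => /eqP X2 /eqP; rewrite subr_eq0 => /eqP X3.
  apply: False_ind; apply: noM.
  have : P = M * sq4 c0 c1 c2 c3.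
    apply: (@mulfI _ M); first by rewrite lt0r_neq0.
    by rewrite hx' X0 X1 X2 X3 /sq4; ring.
  move=> hP; have : (M %| P)%Z by rewrite hP; apply: dvdz_mulr.
  by rewrite dvdzE.
have [rM'|rM'] := leP M r.
  have [Y0 Y1 Y2 Y3 MH] := rM rM'.
  apply: False_ind; apply: noM.
  have H0 : H != 0 by apply/eqP => H0; move: MH M2'; rewrite H0 mulr0 => ->.
  have : P = M * (sq4 c0 c1 c2 c3 - (c0 + c1 + c2 + c3) + 1).
    apply: (@mulfI _ M); first by rewrite lt0r_neq0.
    move: Y0 Y1 Y2 Y3; rewrite /y0 /y1 /y2 /y3 => Y0 Y1 Y2 Y3.
    rewrite hx'.
    have -> : x0 = M * c0 - H by rewrite -Y0; ring.
    have -> : x1 = M * c1 - H by rewrite -Y1; ring.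
    have -> : x2 = M * c2 - H by rewrite -Y2; ring.
    have -> : x3 = M * c3 - H by rewrite -Y3; ring.
    rewrite MH /sq4; ring.
  move=> hP; have : (M %| P)%Z by rewrite hP; apply: dvdz_mulr.
  by rewrite dvdzE.
have [r' hr'] : exists r' : nat, r = r'%:Z by exists `|r|%N; rewrite gez0_abs.
have r'm : (r' < m)%N by move: rM'; rewrite hr' /M ltz_nat.
have r'0 : (0 < r')%N by move: rpos; rewrite hr'; case: r' {hr' r'm}.
apply: (IH r' r'm _ w0 w1 w2 w3).
  by rewrite r'0 /=; apply: ltn_trans mp.
by rewrite ew hr' PoszM mulrC.
Qed.

Lemma prime_rep (p : nat) : prime p -> exists a b c d : int, p%:Z = sq4 a b c d.
Proof.
move=> pp; have [x [y [hx hy hd]]] := @step1 p pp.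
have p1 := prime_gt1 pp.
have [m hm] := dvdnP hd.
have hp : (p./2 * 2 <= p)%N by have := odd_double_half p; rewrite -muln2; case: (odd p) => /= <-; lia.
have m0 : (0 < m)%N by move: hm; case: m => //; rewrite mul0n addn1.
have mp : (m < p)%N.
  have hx2 : (x * 2 <= p)%N by lia.
  have hy2 : (y * 2 <= p)%N by lia.
  have : (m * p * 4 <= p * p * 2 + 4)%N by rewrite -hm; nia.
  nia.
apply: (@descent p pp m _ x y 1 0); first by rewrite m0 mp.
by rewrite -hm /sq4 !PoszD !PoszM; ring.
Qed.

Lemma lin4 (q : int) (z0 z1 z2 z3 : int) : (q %| z0)%Z -> (q %| z1)%Z -> (q %| z2)%Z -> (q %| z3)%Z ->
  forall a b c d : int, (q %| a * z0 + b * z1 + c * z2 + d * z3)%Z.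
Proof. by move=> *; do !apply: rpredD; apply: dvdz_mull. Qed.
Arguments lin4 {q z0 z1 z2 z3}.

Lemma back (q p : nat) (x0 x1 x2 x3 : int) :
  prime q -> prime p -> P4 x0 x1 x2 x3 ->
  (q %| p%:Z * x0)%Z -> (q %| p%:Z * x1)%Z -> (q %| p%:Z * x2)%Z -> (q %| p%:Z * x3)%Z -> q = p.
Proof.
move=> pq pp H h0 h1 h2 h3.
have d : forall x, (q %| p%:Z * x)%Z -> q = p \/ (q %| x)%Z.
  move=> x /(@primez_dvdM q _ _ pq) [/(@primez_dvd_prime q p pq pp) -> |]; by [left|right].
case: (d x0 h0) => // a0; case: (d x1 h1) => // a1; case: (d x2 h2) => // a2.
case: (d x3 h3) => // a3; by case: (H q pq a0 a1 a2 a3).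
Qed.
Arguments back {q p x0 x1 x2 x3}.

Lemma not_dvd_y0 (p : nat) (y0 y1 y2 y3 k : int) : prime p -> p%:Z = sq4 y0 y1 y2 y3 ->
  y0 != 0 -> y0 = k * p%:Z -> False.
Proof.
move=> pp hp y00 hk.
have yp : y0 ^+ 2 <= p%:Z.
  have := sqr_ge0 y1; have := sqr_ge0 y2; have := sqr_ge0 y3.
  rewrite hp /sq4; lia.
have p1 : (1 < p)%N by apply: prime_gt1.
have k0 : k != 0 by move: y00; rewrite hk; apply: contra => /eqP ->; rewrite mul0r.
have k1 : 1 <= k * k by nia.
have : (p%:Z) * p <= y0 ^+ 2 by rewrite hk expr2; nia.
nia.
Qed.

Lemma mul_prim (x0 x1 x2 x3 y0 y1 y2 y3 : int) (p : nat) :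
  P4 x0 x1 x2 x3 -> prime p -> odd p -> p%:Z = sq4 y0 y1 y2 y3 -> y0 != 0 ->
  exists a b c d, sq4 x0 x1 x2 x3 * p%:Z = sq4 a b c d /\ P4 a b c d.
Proof.
move=> HX pp op hp y00.
set z0 := x0*y0 - x1*y1 - x2*y2 - x3*y3.
set z1 := x0*y1 + x1*y0 + x2*y3 - x3*y2.
set z2 := x0*y2 - x1*y3 + x2*y0 + x3*y1.
set z3 := x0*y3 + x1*y2 - x2*y1 + x3*y0.
set u0 := x0*y0 + x1*y1 + x2*y2 + x3*y3.
set u1 := - x0*y1 + x1*y0 - x2*y3 + x3*y2.
set u2 := - x0*y2 + x1*y3 + x2*y0 - x3*y1.
set u3 := - x0*y3 - x1*y2 + x2*y1 + x3*y0.
have backZ : forall q : nat, prime q -> (q %| z0)%Z -> (q %| z1)%Z -> (q %| z2)%Z -> (q %| z3)%Z -> q = p.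
  move=> q pq q0 q1 q2 q3; have L := lin4 q0 q1 q2 q3.
  apply: (back pq pp HX); rewrite hp.
  - rewrite (_ : _ * x0 = y0 * z0 + y1 * z1 + y2 * z2 + y3 * z3) //; rewrite /sq4 /z0 /z1 /z2 /z3; ring.
  - rewrite (_ : _ * x1 = (-y1) * z0 + y0 * z1 + (-y3) * z2 + y2 * z3) //; rewrite /sq4 /z0 /z1 /z2 /z3; ring.
  - rewrite (_ : _ * x2 = (-y2) * z0 + y3 * z1 + y0 * z2 + (-y1) * z3) //; rewrite /sq4 /z0 /z1 /z2 /z3; ring.
  - rewrite (_ : _ * x3 = (-y3) * z0 + (-y2) * z1 + y1 * z2 + y0 * z3) //; rewrite /sq4 /z0 /z1 /z2 /z3; ring.
have backU : forall q : nat, prime q -> (q %| u0)%Z -> (q %| u1)%Z -> (q %| u2)%Z -> (q %| u3)%Z -> q = p.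
  move=> q pq q0 q1 q2 q3; have L := lin4 q0 q1 q2 q3.
  apply: (back pq pp HX); rewrite hp.
  - rewrite (_ : _ * x0 = y0 * u0 + (-y1) * u1 + (-y2) * u2 + (-y3) * u3) //; rewrite /sq4 /u0 /u1 /u2 /u3; ring.
  - rewrite (_ : _ * x1 = y1 * u0 + y0 * u1 + y3 * u2 + (-y2) * u3) //; rewrite /sq4 /u0 /u1 /u2 /u3; ring.
  - rewrite (_ : _ * x2 = y2 * u0 + (-y3) * u1 + y0 * u2 + y1 * u3) //; rewrite /sq4 /u0 /u1 /u2 /u3; ring.
  - rewrite (_ : _ * x3 = y3 * u0 + y2 * u1 + (-y1) * u2 + y0 * u3) //; rewrite /sq4 /u0 /u1 /u2 /u3; ring.
case: (boolP [&& (p %| z0)%Z, (p %| z1)%Z, (p %| z2)%Z & (p %| z3)%Z]) => hb.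
  exists u0, u1, u2, u3; split.
    by rewrite hp /sq4 /u0 /u1 /u2 /u3; ring.
  move=> q pq q0 q1 q2 q3; have qp := backU q pq q0 q1 q2 q3; subst q.
  case/and4P: hb => p0 p1 p2 p3.
  have two : forall i z u x : int, (p %| z)%Z -> (p %| u)%Z -> z + u = 2 * y0 * x -> (p %| x)%Z.
    move=> i z u x pz pu e.
    have : (p %| 2 * y0 * x)%Z by rewrite -e; exact: rpredD.
    case/(@primez_dvdM p _ _ pp) => //.
    case/(@primez_dvdM p _ _ pp).
      by move/(@primez_dvd_prime p 2 pp isT) => e2; move: op; rewrite e2.
    by case/dvdzP => k hk; case: (@not_dvd_y0 p _ _ _ _ k pp hp y00 hk).
  apply: (HX p pp).
  - by apply: (two 0 z0 u0) => //; rewrite /z0 /u0; ring.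
  - by apply: (two 0 z1 u1) => //; rewrite /z1 /u1; ring.
  - by apply: (two 0 z2 u2) => //; rewrite /z2 /u2; ring.
  - by apply: (two 0 z3 u3) => //; rewrite /z3 /u3; ring.
exists z0, z1, z2, z3; split.
  by rewrite hp /sq4 /z0 /z1 /z2 /z3; ring.
move=> q pq q0 q1 q2 q3; have qp := backZ q pq q0 q1 q2 q3; subst q.
by move: hb; rewrite q0 q1 q2 q3.
Qed.

Lemma rep_nz (p : nat) : (0 < p)%N -> prime p ->
  exists a b c d : int, p%:Z = sq4 a b c d /\ a != 0.
Proof.
move=> p0 /prime_rep [a [b [c [d h]]]].
have [a0|a0] := eqVneq a 0; last by exists a, b, c, d.
have [b0|b0] := eqVneq b 0; first last.
  by exists b, a, c, d; split => //; rewrite h /sq4; ring.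
have [c0|c0] := eqVneq c 0; first last.
  by exists c, a, b, d; split => //; rewrite h /sq4; ring.
have [d0|d0] := eqVneq d 0; first last.
  by exists d, a, b, c; split => //; rewrite h /sq4; ring.
by move: h; rewrite a0 b0 c0 d0 /sq4; lia.
Qed.

Lemma odd_rep (n : nat) : odd n -> exists a b c d : int, n%:Z = sq4 a b c d /\ P4 a b c d.
Proof.
elim/ltn_ind: n => n IH on.
have [->|n1] := eqVneq n 1%N.
  exists 1, 0, 0, 0; split; first by rewrite /sq4; ring.
  move=> q pq; rewrite dvdzE /= dvdn1 => /eqP q1; by rewrite q1 in pq.
have n1' : (1 < n)%N by move: on n1; case: n {IH} => [|[|]].
have pp := pdiv_prime n1'.
set p := pdiv n in pp.
have op : odd p.
  case: (even_prime pp) => // e2.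
  by move: (pdiv_dvd n); rewrite -/p e2 dvdn2 on.
set k := (n %/ p)%N.
have nk : n = (k * p)%N by rewrite divnK // pdiv_dvd.
have ok : odd k by move: on; rewrite nk oddM => /andP[].
have p1 := prime_gt1 pp.
have kn : (k < n)%N by rewrite nk; nia.
have [x0 [x1 [x2 [x3 [hx Px]]]]] := IH k kn ok.
have [y0 [y1 [y2 [y3 [hy y00]]]]] := @rep_nz p (ltnW p1) pp.
have [a [b [c [d [h P]]]]] := @mul_prim _ _ _ _ _ _ _ _ p Px pp op hy y00.
exists a, b, c, d; split => //.
by rewrite -h -hx nk PoszM.
Qed.

Lemma double_rep (k : nat) (x0 x1 x2 x3 : int) : odd k -> k%:Z = sq4 x0 x1 x2 x3 -> P4 x0 x1 x2 x3 ->
  exists a b c d : int, (k.*2)%:Z = sq4 a b c d /\ P4 a b c d.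
Proof.
move=> ok hk HX.
exists (x0 - x1), (x0 + x1), (x2 - x3), (x2 + x3); split.
  by rewrite -muln2 PoszM hk /sq4; ring.
move=> q pq q0 q1 q2 q3.
have two : forall x : int, (q %| 2 * x)%Z -> q = 2%N \/ (q %| x)%Z.
  move=> x /(@primez_dvdM q _ _ pq) [/(@primez_dvd_prime q 2 pq isT) -> |]; by [left|right].
case: (two x0); first by rewrite (_ : 2 * x0 = (x0 - x1) + (x0 + x1)); [exact: rpredD | ring].
  move=> e2; subst q.
  move: q0 q1 q2 q3 => /dvdzP[a ha] /dvdzP[b hb] /dvdzP[c hc] /dvdzP[d hd].
  have : k%:Z * 2 = (a^+2 + b^+2 + c^+2 + d^+2) * 4.
    have -> : k%:Z * 2 = (x0 - x1)^+2 + (x0 + x1)^+2 + (x2 - x3)^+2 + (x2 + x3)^+2 by rewrite hk /sq4; ring.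
    by rewrite ha hb hc hd; ring.
  move: ok; case/boolP: (odd k) => // ok _.
  have := odd_double_half k; rewrite ok -muln2.
  set S := (a^+2 + b^+2 + c^+2 + d^+2). lia.
move=> a0.
case: (two x1); first by rewrite (_ : 2 * x1 = (x0 + x1) - (x0 - x1)); [exact: rpredB | ring].
  move=> e2; subst q.
  move: q0 q1 q2 q3 => /dvdzP[a ha] /dvdzP[b hb] /dvdzP[c hc] /dvdzP[d hd].
  have : k%:Z * 2 = (a^+2 + b^+2 + c^+2 + d^+2) * 4.
    have -> : k%:Z * 2 = (x0 - x1)^+2 + (x0 + x1)^+2 + (x2 - x3)^+2 + (x2 + x3)^+2 by rewrite hk /sq4; ring.
    by rewrite ha hb hc hd; ring.
  move: ok; case/boolP: (odd k) => // ok _.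
  have := odd_double_half k; rewrite ok -muln2.
  set S := (a^+2 + b^+2 + c^+2 + d^+2). lia.
move=> a1.
case: (two x2); first by rewrite (_ : 2 * x2 = (x2 - x3) + (x2 + x3)); [exact: rpredD | ring].
  move=> e2; subst q.
  move: q0 q1 q2 q3 => /dvdzP[a ha] /dvdzP[b hb] /dvdzP[c hc] /dvdzP[d hd].
  have : k%:Z * 2 = (a^+2 + b^+2 + c^+2 + d^+2) * 4.
    have -> : k%:Z * 2 = (x0 - x1)^+2 + (x0 + x1)^+2 + (x2 - x3)^+2 + (x2 + x3)^+2 by rewrite hk /sq4; ring.
    by rewrite ha hb hc hd; ring.
  move: ok; case/boolP: (odd k) => // ok _.
  have := odd_double_half k; rewrite ok -muln2.
  set S := (a^+2 + b^+2 + c^+2 + d^+2). lia.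
move=> a2.
case: (two x3); first by rewrite (_ : 2 * x3 = (x2 + x3) - (x2 - x3)); [exact: rpredB | ring].
  move=> e2; subst q.
  move: q0 q1 q2 q3 => /dvdzP[a ha] /dvdzP[b hb] /dvdzP[c hc] /dvdzP[d hd].
  have : k%:Z * 2 = (a^+2 + b^+2 + c^+2 + d^+2) * 4.
    have -> : k%:Z * 2 = (x0 - x1)^+2 + (x0 + x1)^+2 + (x2 - x3)^+2 + (x2 + x3)^+2 by rewrite hk /sq4; ring.
    by rewrite ha hb hc hd; ring.
  move: ok; case/boolP: (odd k) => // ok _.
  have := odd_double_half k; rewrite ok -muln2.
  set S := (a^+2 + b^+2 + c^+2 + d^+2). lia.
move=> a3.
exact: (HX q pq a0 a1 a2 a3).
Qed.

Theorem corollary2p16 (n : nat) :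
  (3 <= n)%N -> n != 5%N -> (n %% 4 != 0)%N ->
  exists a b c d : int,
    [/\ n%:Z = a ^+ 2 + b ^+ 2 + c ^+ 2 + d ^+ 2,
        gcdz (gcdz a b) (gcdz c d) = 1
      & (count (fun x : int => x == 0) [:: a; b; c; d] <= 1)%N].
Proof.
move=> n3 n5 n4.
have [a [b [c [d [h P]]]]] : exists a b c d : int, n%:Z = sq4 a b c d /\ P4 a b c d.
  case/boolP: (odd n) => on; first exact: odd_rep.
  set k := n./2.
  have nk : n = k.*2 by have := odd_double_half n; rewrite (negbTE on) add0n.
  have ok : odd k.
    apply/negPn/negP => ek.
    have := odd_double_half k; rewrite (negbTE ek) add0n => e.
    move: n4; rewrite nk -e -!muln2; lia.
  have [x0 [x1 [x2 [x3 [hx Px]]]]] := @odd_rep k ok.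
  rewrite nk; exact: (@double_rep k _ _ _ _ ok hx Px).
have n1 : n%:Z != 1 by apply/eqP; lia.
have n2 : n%:Z != 2 by apply/eqP; lia.
have n5' : n%:Z != 5 by apply/eqP; move: n5; lia.
have [a' [b' [c' [d' [h' P' hc]]]]] := @from_prim _ _ _ _ _ h P n1 n2 n5'.
exists a', b', c', d'; split => //; exact: P4_gcd.
Qed.
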